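(* Let $N\ge 1$, $\lambda$ a parameter, and for $x,p\in\mathbb{C}^N$ set $$L_k(x,p;\lambda)=\begin{pmatrix}-x_k & x_k(\lambda+x_k)+e^{p_k}\\ -1 & \lambda+x_k\end{pmatrix},\qquad T_N(x,p;\lambda)=L_N(x,p;\lambda)\cdots L_1(x,p;\lambda).$$ If $\widetilde{x}\in\mathbb{C}^N$ satisfies $e^{p_k}=(\widetilde{x}_k-x_k)(\lambda+x_k-\widetilde{x}_{k-1})$ for $k=1,\dots,N$, with periodic boundary conditions ($\widetilde x_0=\widetilde x_N$, $x_{N+1}=x_1$), then $\prod_{k=1}^N(\lambda+x_{k+1}-\widetilde{x}_k)$ is an eigenvalue of $T_N(x,p;\lambda)$.
   Context: The relation between $(x,p)$ and $\widetilde x$ is the first half of the Bäcklund transformation $F_\lambda$ of the periodic dual Toda lattice $\ddot x_k=\dot x_k(x_{k+1}-2x_k+x_{k-1})$. *)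

(* Defs.v *)
From Stdlib Require Import Reals.
From HB Require Import structures.
From mathcomp Require Import all_boot all_order all_algebra.
From mathcomp Require Import complex Rstruct.
Set Implicit Arguments. Unset Strict Implicit. Unset Printing Implicit Defensive.
Import Order.TTheory GRing.Theory Num.Theory.
Local Open Scope ring_scope.

Notation CC := (Rdefinitions.R)[i].

Definition cexp (z : CC) : CC :=
  let a := complex.Re z in let b := complex.Im z in
  Complex (Rtrigo_def.exp a * Rtrigo_def.cos b) (Rtrigo_def.exp a * Rtrigo_def.sin b).

(* Indices k = 1..N are represented by i : 'I_N with k = i+1.
   Lax matrix L_k(x,p;lambda). *)
Definition Lmat (N : nat) (x p : 'I_N -> CC) (lam : CC) (k : 'I_N) : 'M[CC]_2 :=
  \matrix_(i < 2, j < 2)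
    if (i == 0) && (j == 0) then - x k
    else if (i == 0) then x k * (lam + x k) + cexp (p k)
    else if (j == 0) then -1
    else lam + x k.

Definition Tmat (N : nat) (x p : 'I_N -> CC) (lam : CC) : 'M[CC]_2 :=
  \prod_(i < N) Lmat x p lam (rev_ord i).

(* Main.v *)
Require Import Defs.
From HB Require Import structures.
From mathcomp Require Import all_boot all_order all_algebra.
From mathcomp Require Import complex Rstruct ring.
Import GRing.Theory.
Local Open Scope ring_scope.

Lemma eig_col n (A : 'M[CC]_n) (a : CC) (v : 'cV[CC]_n) :
  A *m v = a *: v -> v != 0 -> eigenvalue A a.
Proof.
move=> Av vn.
have ET : eigenvalue A^T a.
  apply/eigenvalueP; exists v^T; last by rewrite trmx_eq0.
  by rewrite -trmx_mul Av linearZ.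
move: ET; rewrite /eigenvalue !kermx_eq0 /row_free.
have -> : A^T - a%:M = (A - a%:M)^T by rewrite linearB /= tr_scalar_mx.
by rewrite mxrank_tr.
Qed.

Definition wv (c : CC) : 'cV[CC]_2 := \col_(i < 2) (if i == 0 then c else 1).

Lemma stepL N (x p : 'I_N -> CC) lam (k : 'I_N) (a b : CC) :
  cexp (p k) = (b - x k) * (lam + x k - a) ->
  Lmat x p lam k *m wv a = (lam + x k - a) *: wv b.
Proof.
move=> He; apply/matrixP => i j; rewrite !mxE big_ord_recl big_ord1 !mxE /=.
rewrite He.
case: i => [[|[|//]] Hi] /=; rewrite ?mxE /=.
  ring.
ring.
Qed.

Lemma ord_pred_inord n m : (m <= n)%N ->
  ord_pred (inord m.+1 : 'I_n.+1) = inord m.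
Proof.
move=> le; apply/eqP; rewrite -val_eqE /=.
rewrite [X in _ == X]inordK ?ltnS //.
have [h|h] := ltnP m n.
  by rewrite inordK ?ltnS // addSn /= modnDr modn_small.
have -> : m = n by apply/eqP; rewrite eqn_leq le.
have -> : (inord n.+1 : 'I_n.+1) = ord0.
  by apply/eqP; rewrite -val_eqE /= /inord /insubd insubF ?ltnn.
by rewrite /= modn_small.
Qed.

Theorem theorem6 (N : nat) (hN : (1 <= N)%N) (lam : CC) (x p xt : 'I_N -> CC) :
  (forall k : 'I_N, cexp (p k) = (xt k - x k) * (lam + x k - xt (ord_pred k))) ->
  eigenvalue (Tmat x p lam) (\prod_(k < N) (lam + x (ordS k) - xt k)).
Proof.
case: N hN x p xt => [//|n] _ x p xt H.
set mu := fun k : 'I_n.+1 => lam + x k - xt (ord_pred k).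
have claim : forall m, (m <= n.+1)%N ->
  (\prod_(i < m) Lmat x p lam (inord (m.-1 - i))) *m wv (xt (ord_pred ord0))
  = (\prod_(i < m) mu (inord i)) *: wv (xt (ord_pred (inord m))).
  elim => [|m IH] hm.
    by rewrite !big_ord0 mul1mx scale1r; congr (wv (xt (ord_pred _))); apply/eqP; rewrite -val_eqE /= inordK.
  rewrite big_ord_recl /=.
  have -> : \prod_(i < m) Lmat x p lam (inord (m - bump 0 i)) =
            \prod_(i < m) Lmat x p lam (inord (m.-1 - i)).
    apply: eq_bigr => i _.
    rewrite (_ : (m - bump 0 i = m.-1 - i)%N) //. by rewrite /bump leq0n add1n subnS -subn1 subnAC subn1.
  have E2 : forall A B : 'M[CC]_2, A * B = A *m B by [].
  rewrite E2 -mulmxA IH; last exact: ltnW.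
  rewrite -scalemxAr (subn0 m).
  rewrite (@stepL _ x p lam (inord m) (xt (ord_pred (inord m))) (xt (ord_pred (inord m.+1)))); last first.
    by rewrite ord_pred_inord ?H // -ltnS.
  by rewrite scalerA big_ord_recr /= mulrC.
apply: (@eig_col _ _ _ (wv (xt (ord_pred ord0)))).
  have -> : Tmat x p lam = \prod_(i < n.+1) Lmat x p lam (inord (n.+1.-1 - i)).
    apply: eq_bigr => i _; congr (Lmat _ _ _ _); apply/eqP.
    by rewrite -val_eqE /= inordK // ltnS leq_subr.
  rewrite claim //.
  have -> : (inord n.+1 : 'I_n.+1) = ord0.
    by apply/eqP; rewrite -val_eqE /= /inord /insubd insubF ?ltnn.
  congr (_ *: _).
  rewrite (reindex_inj (@ordS_inj _)); apply: eq_bigr => i _.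
  by rewrite /mu inord_val; congr (_ - xt _); exact: ordSK.
apply/eqP => /matrixP /(_ 1 0); rewrite !mxE /= => /eqP; apply/negP; exact: oner_neq0.
Qed.
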